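(* Let $0\le\gamma<\alpha<\infty$. There exists a constant $C(\gamma,\alpha)>0$ such that for all $\zeta\in\overline{\mathbb{D}}$ and all $0<r<1$, $$D^{-\gamma}\frac{1}{|1-r\zeta|^{\alpha}}\le\frac{C(\gamma,\alpha)}{|1-r\zeta|^{\alpha-\gamma}},$$ where the fractional integral is taken in the variable $r$ (with $\zeta$ fixed).
   Context: $\mathbb{D}$ is the open unit disk. For a function $u$ integrable on $(0,a)$ and $\gamma>0$, the Riemann–Liouville fractional integral is $D^{-\gamma}u(r)=\frac{1}{\Gamma(\gamma)}\int_0^r (r-x)^{\gamma-1}u(x)\,dx$, $0<r<a$; and $D^{0}u=u$. Thus for $\gamma>0$ the left-hand side equals $\frac{1}{\Gamma(\gamma)}\int_0^r (r-x)^{\gamma-1}|1-x\zeta|^{-\alpha}\,dx$. *)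

(* Defs.v *)
From HB Require Import structures.
From mathcomp Require Import all_boot all_order all_algebra.
From mathcomp Require Import all_classical all_reals all_analysis.
From mathcomp Require Import complex.

Set Implicit Arguments.
Unset Strict Implicit.
Unset Printing Implicit Defensive.
Import Order.TTheory GRing.Theory Num.Theory.
Import numFieldNormedType.Exports.
Local Open Scope classical_set_scope.
Local Open Scope ring_scope.

Definition cmod (R : realType) (z : R[i]) : R := Normc.normc z.

Definition Gamma (R : realType) (g : R) : R :=
  fine (\int[@lebesgue_measure R]_(t in `]0%R, +oo[%classic)
          (powR t (g - 1) * expR (- t))%:E)%E.

(* Riemann-Liouville fractional integral D^{-g} u (r), for g >= 0;
   D^0 u = u.  Extended-real valued (Lebesgue integral). *)
Definition RL_int (R : realType) (g : R) (u : R -> R) (r : R) : \bar R :=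
  if g == 0 then (u r)%:E
  else (((Gamma g)^-1)%:E *
       \int[@lebesgue_measure R]_(x in `]0%R, r[%classic)
          (powR (r - x) (g - 1) * u x)%:E)%E.

(* Main.v *)
Require Import Defs.
From HB Require Import structures.
From mathcomp Require Import all_boot all_order all_algebra.
From mathcomp Require Import all_classical all_reals all_analysis.
From mathcomp Require Import complex.
From mathcomp Require Import measurable_realfun.
From mathcomp Require Import lra ring.
Import Order.TTheory GRing.Theory Num.Theory.
Import numFieldNormedType.Exports.
Local Open Scope classical_set_scope.
Local Open Scope ring_scope.

Section S.
Variable R : realType.

Definition Fq (r q : R) (y : R) : R := powR (r - y) q * (- q)^-1.

Lemma Fq_derivable r q x : x < r -> derivable (Fq r q) x 1.
Proof.
move=> xr; rewrite /Fq.
apply: derivableM => //.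
have -> : (fun y => powR (r - y) q) = (@powR R ^~ q) \o (fun y => r - y) by [].
apply/derivable1_diffP; apply: differentiable_comp.
  by apply/derivable1_diffP; apply: derivableB.
apply/derivable1_diffP; apply: derivable_powR.
by rewrite in_itv /= andbT subr_gt0.
Qed.

Lemma Fq_derive r q x : q != 0 -> x < r -> (Fq r q)^`()%classic x = powR (r - x) (q - 1).
Proof.
move=> q0 xr; rewrite /Fq derive1Mr; last first.
  have -> : (fun y => powR (r - y) q) = (@powR R ^~ q) \o (fun y => r - y) by [].
  apply/derivable1_diffP; apply: differentiable_comp.
    by apply/derivable1_diffP; apply: derivableB.
  apply/derivable1_diffP; apply: derivable_powR.
  by rewrite in_itv /= andbT subr_gt0.
have -> : (fun y => powR (r - y) q) = (@powR R ^~ q) \o (fun y => r - y) by [].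
rewrite derive1_comp; last 2 first.
- exact: derivableB.
- by apply: derivable_powR; rewrite in_itv /= andbT subr_gt0.
rewrite powR_derive1; last by rewrite in_itv /= andbT subr_gt0.
rewrite derive1E deriveB // derive_cst derive_id sub0r.
by rewrite mulrN1 invrN mulrNN mulrC mulrA mulVf // mul1r.
Qed.

Lemma powRB_cont (r p x : R) : x < r -> {for x, continuous (fun y => powR (r - y) p)}.
Proof.
move=> xr; apply: differentiable_continuous; apply/derivable1_diffP.
have -> : (fun y => powR (r - y) p) = (@powR R ^~ p) \o (fun y => r - y) by [].
apply/derivable1_diffP; apply: differentiable_comp.
  by apply/derivable1_diffP; apply: derivableB.
apply/derivable1_diffP; apply: derivable_powR.
by rewrite in_itv /= andbT subr_gt0.
Qed.

Lemma Fq_FTC r q u v : q != 0 -> u < v -> v < r ->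
  (\int[@lebesgue_measure R]_(x in `[u, v]) (powR (r - x) (q - 1))%R%:E =
   (Fq r q v)%:E - (Fq r q u)%:E)%E.
Proof.
move=> q0 uv vr.
apply: continuous_FTC2 => //.
- apply: continuous_in_subspaceT => x; rewrite inE /= in_itv /= => /andP[_ xv].
  by apply: powRB_cont; exact: le_lt_trans xv vr.
- split.
  + move=> x; rewrite in_itv /= => /andP[_ xv]; apply: Fq_derivable.
    exact: lt_trans xv vr.
  + apply: cvg_at_right_filter; apply: differentiable_continuous.
    by apply/derivable1_diffP; apply: Fq_derivable; exact: lt_trans uv vr.
  + apply: cvg_at_left_filter; apply: differentiable_continuous.
    by apply/derivable1_diffP; apply: Fq_derivable.
- move=> x; rewrite in_itv /= => /andP[_ xv]; apply: Fq_derive => //.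
  exact: lt_trans xv vr.
Qed.

Lemma powRB_meas (r p : R) : measurable_fun setT (fun y : R => powR (r - y) p).
Proof.
have -> : (fun y : R => powR (r - y) p) = (@powR R ^~ p) \o (fun y => r - y) by [].
apply: measurableT_comp => //.
by apply: measurable_funB => //; exact: measurable_cst.
Qed.

Local Open Scope ereal_scope.
Lemma improper_le (f : R -> R) (u v : nat -> R) (S : set R) (L : \bar R) :
  measurable S -> measurable_fun setT f ->
  (forall n, (u n.+1 <= u n)%R) -> (forall n, (v n <= v n.+1)%R) ->
  S `<=` \bigcup_n `[u n, v n]%classic ->
  (forall n x, (u n <= x <= v n)%R -> (0 <= f x)%R) ->
  (forall n, \int[@lebesgue_measure R]_(x in `[u n, v n]%classic) (f x)%:E <= L) ->
  \int[@lebesgue_measure R]_(x in S) (f x)%:E <= L.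
Proof.
move=> mS mf un vn Ssub f0 Ib.
have mI n : measurable `[u n, v n]%classic by [].
have mB : measurable (\bigcup_n `[u n, v n]%classic) by exact: bigcupT_measurable.
have mfE : forall D, measurable D -> measurable_fun D (fun x => (f x)%:E).
  by move=> D mD; apply/measurable_EFinP; exact: measurable_funS mf.
have B0 : forall x, (\bigcup_n `[u n, v n]%classic) x -> 0 <= (f x)%:E.
  by move=> x [n _]; rewrite /= in_itv /= => /f0; rewrite lee_fin.
apply: (le_trans (ge0_subset_integral (@lebesgue_measure R) mS mB (mfE _ mB) B0 Ssub)).
have nd : {homo (fun n => `[u n, v n]%classic) : n m / (n <= m)%N >-> (n <= m)%O}.
  apply/nondecreasing_seqP => n; rewrite subsetEset => x /=; rewrite !in_itv /=.
  move=> /andP[h1 h2]; rewrite (le_trans (un n) h1) /=.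
  exact: le_trans h2 (vn n).
have := ge0_nondecreasing_set_cvg_integral (mu := @lebesgue_measure R) nd mI
  (fun n => mfE _ (mI n)) (fun n x h => B0 x (ex_intro2 _ _ n I h)).
move/cvge_to_le; apply.
by apply: nearW => n; exact: Ib.
Qed.

Local Close Scope ereal_scope.
Lemma int_A (r a q : R) : (0 < a)%R -> (q < 0)%R ->
  (\int[@lebesgue_measure R]_(x in `]-oo, (r - a)%R]%classic) (powR (r - x) (q - 1))%R%:E
  <= (powR a q / (- q))%:E)%E.
Proof.
move=> a0 q0.
apply: (@improper_le _ (fun n => r - a - n.+1%:R)%R (fun n => r - a)%R).
- by [].
- exact: powRB_meas.
- by move=> n; rewrite lerD2l lerN2 ler_nat.
- by [].
- move=> x; rewrite /= in_itv /= => xra.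
  exists (Num.trunc (r - a - x)) => //=; rewrite in_itv /= xra andbT.
  by rewrite lerBlDr -lerBlDl ltW // truncnS_gt.
- by move=> n x _; exact: powR_ge0.
- move=> n; rewrite Fq_FTC ?lt_eqF //; last 2 first.
  + by rewrite ltrBlDr ltrDl ltr0n.
  + by rewrite ltrBlDr ltrDl.
  rewrite -EFinB lee_fin /Fq subKr.
  by rewrite gerBl mulr_ge0 ?powR_ge0 // invr_ge0 oppr_ge0 ltW.
Qed.

Lemma int_B (r a q : R) : (0 < a)%R -> (0 < q)%R ->
  (\int[@lebesgue_measure R]_(x in `](r - a)%R, r[%classic) (powR (r - x) (q - 1))%R%:E
  <= (powR a q / q)%:E)%E.
Proof.
move=> a0 q0.
apply: (@improper_le _ (fun n => r - a)%R (fun n => r - a / n.+2%:R)%R).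
- by [].
- exact: powRB_meas.
- by [].
- by move=> n; rewrite lerD2l lerN2 ler_pM2l // lef_pV2 ?posrE ?ltr0n // ler_nat.
- move=> x; rewrite /= in_itv /= => /andP[rax xr].
  exists (Num.trunc (a / (r - x))) => //=; rewrite in_itv /= (ltW rax) /=.
  have rx0 : (0 < r - x)%R by rewrite subr_gt0.
  have h := truncnS_gt (a / (r - x)); rewrite ltr_pdivrMr // in h.
  rewrite lerBrDr -lerBrDl ler_pdivrMr ?ltr0n //; apply: ltW.
  by apply: (lt_le_trans h); rewrite mulrC ler_pM2l // ler_nat.
- by move=> n x _; exact: powR_ge0.
- move=> n; rewrite Fq_FTC ?gt_eqF //; last 2 first.
  + by rewrite ltrD2l ltrN2 ltr_pdivrMr ?ltr0n // ltr_pMr // ltr1n.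
  + by rewrite ltrBlDr ltrDl divr_gt0.
  rewrite -EFinB lee_fin /Fq opprB addrC subKr.
  rewrite (addrC r) subrK invrN mulrN opprK addrC.
  have : (0 <= (a / n.+2%:R) `^ q * q^-1)%R by rewrite mulr_ge0 ?powR_ge0 // invr_ge0 ltW.
  lra.
Qed.

Lemma cmod_real (x : R) : cmod (x%:C)%C = `|x|.
Proof. by rewrite /cmod /= expr0n /= addr0 sqrtr_sqr. Qed.

Lemma geo1 (zeta : R[i]) (x : R) : cmod zeta <= 1 -> 0 <= x ->
  1 - x <= cmod (1 - (x%:C)%C * zeta).
Proof.
move=> z1 x0.
have := le_normcD (1 - (x%:C)%C * zeta) ((x%:C)%C * zeta).
rewrite subrK Normc.normc1 Normc.normcM -/(cmod _) -/(cmod _) cmod_real ger0_norm //.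
move=> h; change (Normc.normc zeta) with (cmod zeta) in h; suff : x * cmod zeta <= x by lra.
by rewrite ler_piMr.
Qed.

Lemma geo2 (zeta : R[i]) (x r : R) : cmod zeta <= 1 -> x <= r ->
  cmod (1 - (r%:C)%C * zeta) <= cmod (1 - (x%:C)%C * zeta) + (r - x).
Proof.
move=> z1 xr.
have -> : (1 - (r%:C)%C * zeta) = (1 - (x%:C)%C * zeta) + ((x - r)%:C)%C * zeta.
  have -> : ((x - r)%:C)%C = (x%:C)%C - (r%:C)%C :> R[i] by rewrite raddfB.
  ring.
apply: (le_trans (le_normcD _ _)).
rewrite Normc.normcM -/(cmod _) -/(cmod _) -/(cmod _) cmod_real lerD2l distrC ger0_norm ?subr_ge0 //.
by rewrite ler_piMr // subr_ge0.
Qed.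

Lemma cmod_meas (zeta : R[i]) : measurable_fun setT (fun x : R => cmod (1 - (x%:C)%C * zeta)).
Proof.
case: zeta => a b; rewrite /cmod /=.
apply: measurableT_comp.
  exact: continuous_measurable_fun (@sqrt_continuous R).
apply: measurable_funD.
  apply: measurable_funX; apply: measurable_funB => //.
  by apply: measurable_funB => //; apply: measurable_funM.
apply: measurable_funX; apply: measurable_funB => //.
by apply: measurable_funD => //; apply: measurable_funM.
Qed.

Lemma powR_antiN (x y p : R) : 0 < x -> x <= y -> 0 <= p -> powR y (-p) <= powR x (-p).
Proof.
move=> x0 xy p0; rewrite !powRN lef_pV2 ?posrE ?powR_gt0 //; last exact: lt_le_trans xy.
by apply: ge0_ler_powR => //; rewrite nnegrE ltW // (lt_le_trans x0).
Qed.

Lemma core_bound (zeta : R[i]) (r gamma alpha : R) : (0 < gamma)%R -> (gamma < alpha)%R ->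
  (cmod zeta <= 1)%R -> (0 < r < 1)%R ->
  (\int[@lebesgue_measure R]_(x in `]0%R, r[%classic)
     (powR (r - x) (gamma - 1) * powR (cmod (1 - (x%:C)%C * zeta)) (- alpha))%R%:E
  <= (powR (cmod (1 - (r%:C)%C * zeta) / 2) (gamma - alpha) / (alpha - gamma)
      + powR (cmod (1 - (r%:C)%C * zeta) / 2) (- alpha) *
        (powR (cmod (1 - (r%:C)%C * zeta) / 2) gamma / gamma))%R%:E)%E.
Proof.
move=> g0 ga z1 /andP[r0 r1].
set N := fun x : R => cmod (1 - (x%:C)%C * zeta)%R.
set a := (N r / 2)%R.
have a0 : (0 < a)%R.
  rewrite /a /N divr_gt0 //; have := geo1 _ _ z1 (ltW r0); lra.
have Nx x : (0 < x < r)%R -> (r - x <= N x)%R /\ (a <= N x)%R.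
  move=> /andP[x0 xr].
  have h1 := geo1 _ _ z1 (ltW x0); have h2 := geo2 _ _ _ z1 (ltW xr).
  rewrite /a /N; split; lra.
set D := `]0%R, r[%classic.
set A1 := `]-oo, (r - a)%R]%classic.
set A2 := `](r - a)%R, r[%classic.
set g := fun x => (powR (r - x) (gamma - 1) * powR (N x) (- alpha))%R.
have mg : measurable_fun setT g.
  apply: measurable_funM; first exact: powRB_meas.
  have -> : (fun x => powR (N x) (- alpha)%R) = (@powR R ^~ (- alpha)) \o N by [].
  by apply: measurableT_comp => //; exact: cmod_meas.
have mgE : forall S, measurable S -> measurable_fun S (fun x => (g x)%:E).
  by move=> S mS; apply/measurable_EFinP; exact: measurable_funS mg.
have g0' x : (0 <= g x)%R by rewrite mulr_ge0 ?powR_ge0.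
have DE : D = (D `&` A1) `|` (D `&` A2).
  rewrite -setIUr; apply/esym/setIidPl => x; rewrite /D /A1 /A2 /= !in_itv /= => /andP[_ xr].
  by case: (leP x (r - a)%R) => h; [left | right].
rewrite DE ge0_integral_setU; last 5 first.
- by apply: measurableI; rewrite /D /A1 /A2.
- by apply: measurableI; rewrite /D /A1 /A2.
- by apply: mgE; apply: measurableU; apply: measurableI; rewrite /D /A1 /A2.
- by move=> x _; rewrite lee_fin; exact: g0'.
- apply/disj_setPS => x [[_ h] [_ h']]; move: h h'; rewrite /A1 /A2 /= !in_itv /=.
  by move=> h /andP[h' _]; move: (lt_le_trans h' h); rewrite ltxx.
have mDA1 : measurable (D `&` A1) by apply: measurableI; rewrite /D /A1.
have mDA2 : measurable (D `&` A2) by apply: measurableI; rewrite /D /A2.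
have mh q : forall S : set R, measurable S ->
    measurable_fun S (fun x : R => (powR (r - x) q)%:E).
  by move=> S mS; apply/measurable_EFinP; exact: measurable_funS (powRB_meas r q).
rewrite EFinD; apply: leeD.
- apply: (@le_trans _ _ (\int[@lebesgue_measure R]_(x in D `&` A1)
     (powR (r - x) ((gamma - alpha) - 1))%:E)%E).
    apply: ge0_le_integral => //.
    + by move=> x _; rewrite lee_fin; exact: g0'.
    + exact: mgE.
    + exact: mh.
    move=> x [xD xA1]; rewrite lee_fin /g.
    move: xD xA1; rewrite /D /A1 /= !in_itv /= => xD xra.
    have [h1 _] := Nx x xD.
    have rx0 : (0 < r - x)%R by case/andP: xD => _ xr; rewrite subr_gt0.
    apply: (@le_trans _ _ (powR (r - x) (gamma - 1) * powR (r - x) (- alpha))).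
      rewrite ler_wpM2l ?powR_ge0 //; apply: powR_antiN => //.
      by apply: ltW; exact: lt_trans ga.
    rewrite -powRD; last by rewrite (gt_eqF rx0) implybT.
    by rewrite le_eqVlt; apply/orP; left; apply/eqP; congr powR; lra.
  apply: (@le_trans _ _ (\int[@lebesgue_measure R]_(x in A1)
     (powR (r - x) ((gamma - alpha) - 1))%:E)%E).
    have mA1 : measurable A1 by rewrite /A1.
    apply: ge0_subset_integral; [exact: mDA1 | exact: mA1 | exact: mh | | ].
    + by move=> x _; rewrite lee_fin powR_ge0.
    + by move=> x [].
  have := @int_A r a (gamma - alpha) a0; rewrite subr_lt0 opprB => h.
  exact: h ga.
- apply: (@le_trans _ _ (\int[@lebesgue_measure R]_(x in D `&` A2)
     (powR a (- alpha) * powR (r - x) (gamma - 1))%:E)%E).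
    apply: ge0_le_integral => //.
    + by move=> x _; rewrite lee_fin; exact: g0'.
    + exact: mgE.
    + by apply/measurable_EFinP; apply: measurable_funM => //;
        apply: measurable_funS (powRB_meas r _).
    move=> x [xD xA2]; rewrite lee_fin /g.
    move: xD xA2; rewrite /D /A2 /= !in_itv /= => xD /andP[xra _].
    have [_ h2] := Nx x xD.
    rewrite mulrC ler_wpM2r ?powR_ge0 //; apply: powR_antiN => //.
    by apply: ltW; exact: lt_trans ga.
  under eq_integral do rewrite EFinM.
  rewrite ge0_integralZl_EFin; last 4 first.
  + exact: mDA2.
  + by move=> x _; rewrite lee_fin powR_ge0.
  + exact: mh.
  + exact: powR_ge0.
  rewrite EFinM; apply: lee_wpmul2l; first by rewrite lee_fin powR_ge0.
  apply: (@le_trans _ _ (\int[@lebesgue_measure R]_(x in A2)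
     (powR (r - x) (gamma - 1))%:E)%E).
    have mA2 : measurable A2 by rewrite /A2.
    apply: ge0_subset_integral; [exact: mDA2 | exact: mA2 | exact: mh | | ].
    + by move=> x _; rewrite lee_fin powR_ge0.
    + by move=> x [].
  exact: int_B.
Qed.
End S.

Theorem lemma2 (R : realType) (gamma alpha : R) :
  0 <= gamma -> gamma < alpha ->
  exists C : R, 0 < C /\
    forall (zeta : R[i]) (r : R), cmod zeta <= 1 -> 0 < r < 1 ->
      (RL_int gamma (fun x => powR (cmod (1 - (x%:C)%C * zeta)%R) (- alpha)%R) r
        <= (C /  powR (cmod (1 - (r%:C)%C * zeta)%R) (alpha - gamma)%R)%:E)%E.
Proof.
move=> g0 ga.
have [->|gn0] := eqVneq gamma 0.
  exists 1; split => // zeta r z1 r01.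
  by rewrite /RL_int eqxx lee_fin subr0 powRN mul1r.
have gp : 0 < gamma by rewrite lt_def gn0 g0.
set G := Gamma gamma.
set K0 := (alpha - gamma)^-1 + gamma^-1.
have K0p : 0 < K0 by rewrite addr_gt0 // invr_gt0 // subr_gt0.
exists ((`|G^-1| + 1) * powR 2 (alpha - gamma) * K0); split.
  by rewrite !mulr_gt0 ?powR_gt0 // ltr_wpDl.
move=> zeta r z1 r01.
rewrite /RL_int (negbTE gn0) -/G.
move: (@core_bound R zeta r gamma alpha gp ga z1 r01).
set I := (\int[_]_(_ in _) _)%E.
have I0 : (0 <= I)%E by apply: integral_ge0 => x _; rewrite lee_fin mulr_ge0 ?powR_ge0.
clearbody I.
set M := cmod (1 - (r%:C)%C * zeta).
have M0 : 0 < M.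
  have := @geo1 R zeta r z1 (ltW (andP r01).1); case/andP: r01 => _ r1; rewrite -/M; lra.
set p := alpha - gamma.
have p0 : 0 < p by rewrite subr_gt0.
have M20 : 0 < M / 2 by rewrite divr_gt0.
have E1 : powR (M / 2) (- alpha) * powR (M / 2) gamma = powR (M / 2) (gamma - alpha).
  by rewrite -powRD ?(gt_eqF M20) ?implybT // addrC.
have E2 : powR (M / 2) (gamma - alpha) = powR 2 p / powR M p.
  rewrite -opprB -/p powRN powRM ?invr_ge0 ?ltW //.
  have h2 : powR 2^-1 p * powR 2 p = 1.
    by rewrite -powRM ?invr_ge0 // mulVf ?pnatr_eq0 // powR1.
  have h2' : powR 2^-1 p = (powR 2 p)^-1.
    by apply: (mulIf (x := powR 2 p)); rewrite ?powR_gt0 ?gt_eqF // h2 mulVf // gt_eqF // powR_gt0.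
  by rewrite h2' invfM invrK mulrC.
set B := powR 2 p * K0 / powR M p.
have EB : powR (M / 2) (gamma - alpha) / (alpha - gamma) +
    powR (M / 2) (- alpha) * (powR (M / 2) gamma / gamma) = B.
  by rewrite mulrA E1 E2 /B /K0 -/p; field; rewrite ?gt_eqF ?powR_gt0.
rewrite EB.
have B0 : 0 <= B by rewrite /B !mulr_ge0 ?invr_ge0 ?powR_ge0 ?ltW.
have -> : (`|G^-1| + 1) * powR 2 p * K0 / powR M p = (`|G^-1| + 1) * B.
  by rewrite /B !mulrA.
case: I I0 => [i| |] //= i0; rewrite ?lee_fin // => iB.
have t1 : G^-1 * i <= `|G^-1| * i by rewrite ler_wpM2r // Num.Theory.ler_norm.
have t2 : `|G^-1| * i <= `|G^-1| * B by rewrite ler_wpM2l.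
rewrite mulrDl mul1r; lra.
Qed.
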